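(* In the planar algebra $\mathcal P$ described in the context, the traces are: $\mathrm{tr}(\emptyset)=1$, $\mathrm{tr}(P_1)=2$, $\mathrm{tr}(P_2)=3$, $\mathrm{tr}(P_3)=4$, $\mathrm{tr}(P_4)=3$, $\mathrm{tr}(P_5)=2$, $\mathrm{tr}(P_6)=1$, $\mathrm{tr}(Q_4)=2$.
   Context: $\mathcal P$ is the unshaded planar algebra generated by a self-adjoint $S\in\mathcal P_4$ modulo: (i) a closed loop equals $2$; (ii) $S$ is uncuppable, uncappable and unsidecappable (multiplying by any Temperley–Lieb cup/cap element $e_j$ on top or bottom gives 0, and its left and right partial traces vanish); (iii) $S^2=6f^{(4)}+S$; (iv) the jellyfish relation: the rainbowed $S$ (all 8 strands bent to the bottom over the right) with an extra strand passing above it equals the same with the extra strand passing below the box, crossing over its 8 strands, crossings defined by the Kauffman rule crossing $=i\cdot(\text{A-smoothing})-i\cdot(\text{B-smoothing})$. Jones–Wenzl projections: $f^{(1)}=X$ (single strand), $f^{(k+1)}=f^{(k)}\otimes X-\frac{k}{k+1}(f^{(k)}\otimes X)e_k(f^{(k)}\otimes X)$, where $e_k$ has a cap and cup at positions $k,k+1$. Define $P_1=X$, $P_2=f^{(2)}$, $P_3=f^{(3)}$, $P_4=\frac35f^{(4)}-\frac15S$, $Q_4=\frac25f^{(4)}+\frac15S$, $P_5=P_4\otimes X-\frac43(P_4\otimes X)e_4(P_4\otimes X)$, $P_6=P_5\otimes X-\frac32(P_5\otimes X)e_5(P_5\otimes X)$. $\mathrm{tr}$ is the (right) trace, closing up all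 strands. *)

(* Defs.v *)
(* An unshaded planar algebra with loop parameter is encoded (equivalently,
   by the standard correspondence planar algebras <-> strict pivotal
   categories generated by a symmetrically self-dual object) as a
   K-linear strict monoidal *-category whose objects are natural numbers
   (numbers of strands), with a self-dual generating strand given by
   cup/cap satisfying both zigzag relations, and pivotality
   (full rotation of any element of P_{0,n} is the identity).
   pahom m n = diagrams with m boundary points at the bottom and n at the top.
   P_n (2n boundary points) = pahom n n, with multiplication = vertical
   stacking (mcomp f g = f on top of g).
   CONVENTION: tens f g places f to the LEFT of g; for f : pahom m n,
   g : pahom p q, its type is written pahom (p + m) (q + n) (the count p+m is
   just m+p; the order of summands is chosen so that tensoring by a single
   strand on the right gives pahom m.+1 n.+1 definitionally). *)
From HB Require Import structures.
From mathcomp Require Import all_boot all_order all_algebra.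
Set Implicit Arguments. Unset Strict Implicit. Unset Printing Implicit Defensive.
Import Order.TTheory GRing.Theory Num.Theory.
Local Open Scope ring_scope.

Record paops (K : numClosedFieldType) := PAOps {
  pahom : nat -> nat -> lmodType K;
  mcomp : forall l m n, pahom m n -> pahom l m -> pahom l n;
  idm : forall n, pahom n n;
  tens : forall m n p q, pahom m n -> pahom p q -> pahom (p + m)%N (q + n)%N;
  cup : pahom 0 2;
  cap : pahom 2 0;
  dag : forall m n, pahom m n -> pahom n m }.

Arguments pahom {K} _ _ _.
Arguments mcomp {K _ _ _ _} _ _.
Arguments idm {K _} _.
Arguments tens {K _ _ _ _ _} _ _.
Arguments cup {K _}.
Arguments cap {K _}.
Arguments dag {K _ _ _} _.

Section Ops.
Variables (K : numClosedFieldType) (A : paops K).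

Definition hcast m m' n n' (Em : m = m') (En : n = n') (f : pahom A m n)
  : pahom A m' n' :=
  match Em in _ = a, En in _ = b return pahom A a b with
  | erefl, erefl => f end.

(* one-click rotation of an element of P_{0,n+1}: the leftmost boundary
   point is moved to the rightmost position *)
Definition rot n (x : pahom A 0 n.+1) : pahom A 0 n.+1 :=
  mcomp (hcast (addnS n.+1 1) (addn0 n.+1) (tens (@cap _ A) (idm n.+1)))
        (mcomp (tens (tens (idm 1) x) (idm 1)) cup).

Definition E2 : pahom A 2 2 := mcomp cup cap.

(* e-element: a strands, then cap/cup at the next two positions, then b
   strands; i.e. e_{a+1} on a+b+2 strands *)
Definition ee a b : pahom A (b + (2 + a)) (b + (2 + a)) :=
  tens (tens (idm a) E2) (idm b).

(* Jones-Wenzl: jw k = f^(k+1) *)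
Fixpoint jw k : pahom A k.+1 k.+1 :=
  match k return pahom A k.+1 k.+1 with
  | 0 => idm 1
  | j.+1 => let g := tens (jw j) (idm 1) in
            g - ((j.+1)%:R / (j.+2)%:R) *: mcomp g (mcomp (ee j 0) g)
  end.

(* f^(k), with f^(0) the empty diagram *)
Definition JW k : pahom A k k :=
  match k return pahom A k k with 0 => idm 0 | j.+1 => jw j end.

Definition rptr n (x : pahom A n.+1 n.+1) : pahom A n n :=
  mcomp (tens (idm n) cap) (mcomp (tens x (idm 1)) (tens (idm n) cup)).

Definition lptr4 (x : pahom A 4 4) : pahom A 3 3 :=
  mcomp (tens cap (idm 3)) (mcomp (tens (idm 1) x) (tens cup (idm 3))).

Fixpoint tr n : pahom A n n -> pahom A 0 0 :=
  match n return pahom A n n -> pahom A 0 0 with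
  | 0 => fun x => x
  | n'.+1 => fun x => tr (rptr x)
  end.

(* Kauffman crossing, overstrand from bottom-left to top-right:
   i*(A-smoothing) - i*(B-smoothing), A-smoothing = identity *)
Definition crossing : pahom A 2 2 := 'i *: idm 2 - 'i *: E2.

Definition sig a b : pahom A (b + (2 + a)) (b + (2 + a)) :=
  tens (tens (idm a) crossing) (idm b).

Definition rainbow_cap : pahom A 8 0 :=
  mcomp (mcomp (mcomp cap (tens (tens (idm 1) cap) (idm 1)))
               (tens (tens (idm 2) cap) (idm 2)))
        (tens (tens (idm 3) cap) (idm 3)).

(* rainbowed S: the 4 top strands bent down over the right *)
Definition rainbowed (S : pahom A 4 4) : pahom A 8 0 :=
  mcomp rainbow_cap (tens S (idm 4)).

(* extra strand (bottom positions 1 and 10) passing above the box *)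
Definition jelly_above (S : pahom A 4 4) : pahom A 10 0 :=
  mcomp cap (tens (tens (idm 1) (rainbowed S)) (idm 1)).

(* extra strand passing below the box, crossing over its 8 strands *)
Definition jelly_below (S : pahom A 4 4) : pahom A 10 0 :=
  mcomp (rainbowed S)
   (mcomp (tens (idm 8) cap)
    (mcomp (sig 7 1) (mcomp (sig 6 2) (mcomp (sig 5 3) (mcomp (sig 4 4)
    (mcomp (sig 3 5) (mcomp (sig 2 6) (mcomp (sig 1 7) (sig 0 8))))))))).

End Ops.

Arguments hcast {K A m m' n n'} Em En f.
Arguments rot {K A n} x.
Arguments E2 {K A}.
Arguments ee {K A} a b.
Arguments jw {K A} k.
Arguments JW {K A} k.
Arguments rptr {K A n} x.
Arguments lptr4 {K A} x.
Arguments tr {K A n} x.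

Record pa_axioms (K : numClosedFieldType) (A : paops K) : Prop := {
  mcompDl : forall l m n (a : K) (f g : pahom A m n) (h : pahom A l m),
    mcomp (a *: f + g) h = a *: mcomp f h + mcomp g h;
  mcompDr : forall l m n (a : K) (f : pahom A m n) (g h : pahom A l m),
    mcomp f (a *: g + h) = a *: mcomp f g + mcomp f h;
  mcompA : forall k l m n (f : pahom A m n) (g : pahom A l m) (h : pahom A k l),
    mcomp f (mcomp g h) = mcomp (mcomp f g) h;
  mcomp1l : forall m n (f : pahom A m n), mcomp (idm n) f = f;
  mcomp1r : forall m n (f : pahom A m n), mcomp f (idm m) = f;
  tensDl : forall m n p q (a : K) (f g : pahom A m n) (h : pahom A p q),
    tens (a *: f + g) h = a *: tens f h + tens g h;
  tensDr : forall m n p q (a : K) (f : pahom A m n) (g h : pahom A p q),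
    tens f (a *: g + h) = a *: tens f g + tens f h;
  tensA : forall m n p q r s (f : pahom A m n) (g : pahom A p q) (h : pahom A r s),
    tens (tens f g) h
    = hcast (esym (addnA r p m)) (esym (addnA s q n)) (tens f (tens g h));
  tens1r : forall m n (f : pahom A m n), tens f (idm 0) = f;
  tens1l : forall m n (f : pahom A m n),
    tens (idm 0) f = hcast (esym (addn0 m)) (esym (addn0 n)) f;
  tens_idm : forall m n, tens (@idm _ A m) (idm n) = idm (n + m);
  interchange : forall l m n l' m' n' (f : pahom A m n) (g : pahom A l m)
      (f' : pahom A m' n') (g' : pahom A l' m'),
    tens (mcomp f g) (mcomp f' g') = mcomp (tens f f') (tens g g');
  zigzag1 : mcomp (tens (@idm _ A 1) cap) (tens cup (idm 1)) = idm 1;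
  zigzag2 : mcomp (tens (@cap _ A) (idm 1)) (tens (idm 1) cup) = idm 1;
  pivotal : forall n (x : pahom A 0 n.+1), iter n.+1 rot x = x;
  dagD : forall m n (a : K) (f g : pahom A m n),
    dag (a *: f + g) = a^* *: dag f + dag g;
  dagK : forall m n (f : pahom A m n), dag (dag f) = f;
  dag_mcomp : forall l m n (f : pahom A m n) (g : pahom A l m),
    dag (mcomp f g) = mcomp (dag g) (dag f);
  dag_tens : forall m n p q (f : pahom A m n) (g : pahom A p q),
    dag (tens f g) = tens (dag f) (dag g);
  dag_cup : dag (@cup _ A) = cap }.

Record generator_relations (K : numClosedFieldType) (A : paops K)
    (S : pahom A 4 4) : Prop := {
  loop_value : mcomp (@cap _ A) cup = 2 *: idm 0;
  S_selfadjoint : dag S = S;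
  S_uncappable1 : mcomp (ee 0 2) S = 0;
  S_uncappable2 : mcomp (ee 1 1) S = 0;
  S_uncappable3 : mcomp (ee 2 0) S = 0;
  S_uncuppable1 : mcomp S (ee 0 2) = 0;
  S_uncuppable2 : mcomp S (ee 1 1) = 0;
  S_uncuppable3 : mcomp S (ee 2 0) = 0;
  S_right_ptrace : rptr S = 0;
  S_left_ptrace : lptr4 S = 0;
  S_square : mcomp S S = 6 *: JW 4 + S;
  S_jellyfish : jelly_above S = jelly_below S }.

Section Projections.
Variables (K : numClosedFieldType) (A : paops K) (S : pahom A 4 4).
Definition P1 : pahom A 1 1 := idm 1.
Definition P2 : pahom A 2 2 := JW 2.
Definition P3 : pahom A 3 3 := JW 3.
Definition P4 : pahom A 4 4 := (3 / 5) *: JW 4 - (1 / 5) *: S.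
Definition Q4 : pahom A 4 4 := (2 / 5) *: JW 4 + (1 / 5) *: S.
Definition P5 : pahom A 5 5 :=
  let g := tens P4 (idm 1) in g - (4 / 3) *: mcomp g (mcomp (ee 3 0) g).
Definition P6 : pahom A 6 6 :=
  let g := tens P5 (idm 1) in g - (3 / 2) *: mcomp g (mcomp (ee 4 0) g).
End Projections.

(* Main.v *)
Require Import Defs.
From HB Require Import structures.
From mathcomp Require Import all_boot all_order all_algebra.
Import Order.TTheory GRing.Theory Num.Theory.
Require Import Defs.
From mathcomp Require Import ring.
Local Open Scope ring_scope.

Section Basics.
Variables (K : numClosedFieldType) (A : paops K).
Hypothesis ax : pa_axioms A.

Lemma hcast_id m n (E1 : m = m) (E2 : n = n) (f : pahom A m n) : hcast E1 E2 f = f.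
Proof. by rewrite (eq_irrelevance E1 erefl) (eq_irrelevance E2 erefl). Qed.

Lemma x0 (V : zmodType) (x : V) : x = x + x -> x = 0.
Proof. by move=> h; apply: (addrI x); rewrite addr0 -h. Qed.

Lemma mcomp0l l m n (h : pahom A l m) : mcomp (0 : pahom A m n) h = 0.
Proof. by apply: x0; have := mcompDl ax 1 (0 : pahom A m n) 0 h; rewrite !scale1r addr0. Qed.
Lemma mcomp0r l m n (f : pahom A m n) : mcomp f (0 : pahom A l m) = 0.
Proof. by apply: x0; have := mcompDr ax 1 f (0 : pahom A l m) 0; rewrite !scale1r addr0. Qed.
Lemma tens0l m n p q (h : pahom A p q) : tens (0 : pahom A m n) h = 0.
Proof. by apply: x0; have := tensDl ax 1 (0 : pahom A m n) 0 h; rewrite !scale1r addr0. Qed.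
Lemma tens0r m n p q (f : pahom A m n) : tens f (0 : pahom A p q) = 0.
Proof. by apply: x0; have := tensDr ax 1 f (0 : pahom A p q) 0; rewrite !scale1r addr0. Qed.

Lemma mcompZl l m n (a : K) (f : pahom A m n) (h : pahom A l m) :
  mcomp (a *: f) h = a *: mcomp f h.
Proof. by have := mcompDl ax a f 0 h; rewrite addr0 mcomp0l addr0. Qed.
Lemma mcompZr l m n (a : K) (f : pahom A m n) (h : pahom A l m) :
  mcomp f (a *: h) = a *: mcomp f h.
Proof. by have := mcompDr ax a f h 0; rewrite addr0 mcomp0r addr0. Qed.
Lemma mcompDl' l m n (f g : pahom A m n) (h : pahom A l m) :
  mcomp (f + g) h = mcomp f h + mcomp g h.
Proof. by rewrite -[f]scale1r (mcompDl ax) !scale1r. Qed.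
Lemma mcompDr' l m n (f : pahom A m n) (g h : pahom A l m) :
  mcomp f (g + h) = mcomp f g + mcomp f h.
Proof. by rewrite -[g]scale1r (mcompDr ax) !scale1r. Qed.
Lemma mcompNl l m n (f : pahom A m n) (h : pahom A l m) :
  mcomp (- f) h = - mcomp f h.
Proof. by rewrite -scaleN1r mcompZl scaleN1r. Qed.
Lemma mcompNr l m n (f : pahom A m n) (h : pahom A l m) :
  mcomp f (- h) = - mcomp f h.
Proof. by rewrite -scaleN1r mcompZr scaleN1r. Qed.
Lemma mcompBl l m n (f g : pahom A m n) (h : pahom A l m) :
  mcomp (f - g) h = mcomp f h - mcomp g h.
Proof. by rewrite mcompDl' mcompNl. Qed.
Lemma mcompBr l m n (f : pahom A m n) (g h : pahom A l m) :
  mcomp f (g - h) = mcomp f g - mcomp f h.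
Proof. by rewrite mcompDr' mcompNr. Qed.

Lemma tensZl m n p q (a : K) (f : pahom A m n) (h : pahom A p q) :
  tens (a *: f) h = a *: tens f h.
Proof. by have := tensDl ax a f 0 h; rewrite addr0 tens0l addr0. Qed.
Lemma tensZr m n p q (a : K) (f : pahom A m n) (h : pahom A p q) :
  tens f (a *: h) = a *: tens f h.
Proof. by have := tensDr ax a f h 0; rewrite addr0 tens0r addr0. Qed.
Lemma tensDl' m n p q (f g : pahom A m n) (h : pahom A p q) :
  tens (f + g) h = tens f h + tens g h.
Proof. by rewrite -[f]scale1r (tensDl ax) !scale1r. Qed.
Lemma tensBl m n p q (f g : pahom A m n) (h : pahom A p q) :
  tens (f - g) h = tens f h - tens g h.
Proof. by rewrite tensDl' -scaleN1r tensZl scaleN1r. Qed.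

Definition R {k} (f : pahom A k k) : pahom A k.+1 k.+1 := tens f (idm 1).

Lemma RM k (f g : pahom A k k) : R (mcomp f g) = mcomp (R f) (R g).
Proof. rewrite /R -{1}(mcomp1l ax (idm 1)). exact (interchange ax f g (idm 1) (idm 1)). Qed.

Lemma RRE m n (f : pahom A m n) :
  tens (tens f (idm 1)) (idm 1) = tens f (idm 2).
Proof. by rewrite tensA // tens_idm //; apply: hcast_id. Qed.


Lemma mcompA' k l m n (f : pahom A m n) (g : pahom A l m) (h : pahom A k l) :
    mcomp (mcomp f g) h = mcomp f (mcomp g h).
Proof. by rewrite (mcompA ax). Qed.

Lemma capnat n m (f : pahom A n m) :
  mcomp (tens (idm m) cap) (tens f (idm 2)) = mcomp f (tens (idm n) cap).
Proof.
transitivity (tens f (@cap _ A)).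
  have h := interchange ax (idm m) f cap (idm 2).
  rewrite (mcomp1l ax) (mcomp1r ax) in h; exact (esym h).
have h := interchange ax f (idm n) (idm 0) cap.
rewrite (mcomp1l ax) (mcomp1r ax) (tens1r ax) in h; exact h.
Qed.

Lemma cupnat n m (f : pahom A n m) :
  mcomp (tens f (idm 2)) (tens (idm n) cup) = mcomp (tens (idm m) cup) f.
Proof.
transitivity (tens f (@cup _ A)).
  have h := interchange ax f (idm n) (idm 2) cup.
  rewrite (mcomp1l ax) (mcomp1r ax) in h; exact (esym h).
have h := interchange ax (idm m) f cup (idm 0).
rewrite (mcomp1l ax) (mcomp1r ax) (tens1r ax) in h; exact h.
Qed.

Lemma rptrE n (x : pahom A n.+1 n.+1) :
  rptr x = mcomp (tens (idm n) cap) (mcomp (tens x (idm 1)) (tens (idm n) cup)).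
Proof. by []. Qed.

Lemma rptr_nat n (f g : pahom A n n) (x : pahom A n.+1 n.+1) :
  rptr (mcomp (R f) (mcomp x (R g))) = mcomp f (mcomp (rptr x) g).
Proof.
rewrite !rptrE.
have -> : tens (mcomp (R f) (mcomp x (R g))) (idm 1)
   = mcomp (tens f (idm 2)) (mcomp (tens x (idm 1)) (tens g (idm 2))).
  rewrite -!RRE; exact (etrans (RM _ (R f) (mcomp x (R g))) (f_equal _ (RM _ x (R g)))).
by rewrite !(mcompA ax) capnat -!(mcompA ax) cupnat.
Qed.

Variable S : pahom A 4 4.
Hypothesis gr : generator_relations S.

Lemma capcup n : mcomp (tens (idm n) (@cap _ A)) (tens (idm n) cup) = 2 *: idm n.
Proof.
have h := interchange ax (idm n) (idm n) (@cap _ A) cup.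
rewrite (mcomp1l ax) (loop_value gr) tensZr (tens_idm ax) in h; exact (esym h).
Qed.

Lemma rptrR n (f : pahom A n n) : rptr (R f) = 2 *: f.
Proof.
by rewrite rptrE /R RRE cupnat (mcompA ax) capcup mcompZl (mcomp1l ax).
Qed.

Lemma idmS j : tens (@idm _ A j) (idm 1) = idm j.+1.
Proof. exact (tens_idm ax j 1). Qed.

Lemma capS j : tens (@idm _ A j.+1) cap = tens (idm j) (tens (idm 1) cap).
Proof. have h := tensA ax (idm j) (idm 1) (@cap _ A); rewrite hcast_id in h; rewrite -idmS; exact h. Qed.
Lemma cupS j : tens (@idm _ A j.+1) cup = tens (idm j) (tens (idm 1) cup).
Proof. have h := tensA ax (idm j) (idm 1) (@cup _ A); rewrite hcast_id in h; rewrite -idmS; exact h. Qed.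
Lemma E2S j : tens (tens (@idm _ A j) E2) (idm 1) = tens (idm j) (tens E2 (idm 1)).
Proof. have h := tensA ax (idm j) (@E2 _ A) (idm 1); rewrite hcast_id in h; exact h. Qed.

Lemma tensI_mcomp j p q r (a : pahom A q r) (b : pahom A p q) :
  mcomp (tens (idm j) a) (tens (idm j) b) = tens (idm j) (mcomp a b).
Proof.
have h := interchange ax (idm j) (idm j) a b.
rewrite (mcomp1l ax) in h; exact (esym h).
Qed.

Lemma zz : mcomp (tens (idm 1) cap) (mcomp (tens E2 (idm 1)) (tens (idm 1) cup))
   = idm 1 :> pahom A 1 1.
Proof.
have -> : tens (@E2 _ A) (idm 1) = mcomp (tens cup (idm 1)) (tens cap (idm 1)).
  have h := interchange ax (@cup _ A) (@cap _ A) (idm 1) (idm 1).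
  rewrite (mcomp1l ax) in h; exact h.
by rewrite (mcompA ax) (mcompA ax) (zigzag1 ax) (mcomp1l ax) (zigzag2 ax).
Qed.

Lemma rptrE2 j : rptr (tens (@idm _ A j) E2) = idm j.+1.
Proof.
transitivity (tens (idm j) (mcomp (tens (idm 1) cap) (mcomp (tens E2 (idm 1)) (tens (idm 1) (@cup _ A))))); last by rewrite zz idmS.
rewrite -!tensI_mcomp -capS -cupS -E2S tensI_mcomp; reflexivity.
Qed.

Lemma ege j (f : pahom A j.+1 j.+1) :
  mcomp (tens (idm j) E2) (mcomp (R f) (tens (idm j) E2))
  = mcomp (tens (rptr f) (idm 2)) (tens (idm j) E2).
Proof.
have eE : tens (@idm _ A j) E2 = mcomp (tens (idm j) cup) (tens (idm j) cap)
  by rewrite tensI_mcomp.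
transitivity (mcomp (mcomp (tens (idm j) cup) (rptr f)) (tens (idm j) cap)).
  by rewrite rptrE eE !(mcompA ax).
by rewrite eE (mcompA ax) cupnat.
Qed.

Lemma rptrD n (x y : pahom A n.+1 n.+1) : rptr (x + y) = rptr x + rptr y.
Proof. by rewrite !rptrE tensDl' mcompDl' mcompDr'. Qed.
Lemma rptrZ n a (x : pahom A n.+1 n.+1) : rptr (a *: x) = a *: rptr x.
Proof. by rewrite !rptrE tensZl mcompZl mcompZr. Qed.
Lemma rptrN n (x : pahom A n.+1 n.+1) : rptr (- x) = - rptr x.
Proof. by rewrite -scaleN1r rptrZ scaleN1r. Qed.
Lemma rptrB n (x y : pahom A n.+1 n.+1) : rptr (x - y) = rptr x - rptr y.
Proof. by rewrite rptrD rptrN. Qed.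

Lemma step j (f : pahom A j.+1 j.+1) (p : pahom A j j) (lam c : K) :
  mcomp f f = f -> rptr f = lam *: p -> mcomp f (R p) = f -> c * lam = 1 ->
  let F := R f - c *: mcomp (R f) (mcomp (tens (idm j) E2) (R f)) in
  [/\ mcomp F F = F, mcomp F (R f) = F & rptr F = (2 - c) *: f].
Proof.
move=> ff rf fp cl F.
set g := R f; set e := tens (@idm _ A j) (@E2 _ A).
have gg : mcomp g g = g by rewrite /g -RM ff.
have gg' : forall l (X : pahom A l _), mcomp g (mcomp g X) = mcomp g X.
  by move=> l X; rewrite (mcompA ax) gg.
have gRR : mcomp g (R (R p)) = g by rewrite /g -RM fp.
have ege' : forall l (X : pahom A l _),
    mcomp e (mcomp g (mcomp e X)) = lam *: mcomp (R (R p)) (mcomp e X).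
  move=> l X; rewrite (mcompA ax) (mcompA ax) -(mcompA ax e g e) /e /g ege rf.
  by rewrite tensZl -RRE -(mcompA ax) mcompZl.
have gegeg : mcomp (mcomp g (mcomp e g)) (mcomp g (mcomp e g)) = lam *: mcomp g (mcomp e g).
  by rewrite -!(mcompA ax) gg' ege' mcompZr (mcompA ax) gRR.
have Fg : mcomp F g = F.
  by rewrite /F mcompBl mcompZl gg -!(mcompA ax) gg.
have Fgeg : mcomp F (mcomp g (mcomp e g)) = 0.
  rewrite /F mcompBl mcompZl gegeg gg' scalerA cl scale1r; exact: subrr.
split => //.
  by rewrite {2}/F mcompBr mcompZr Fgeg scaler0 subr0 Fg.
rewrite /F rptrB rptrZ /g rptrR.
have -> : mcomp (R f) (mcomp e (R f)) = mcomp (R f) (mcomp e (R f)) by [].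
rewrite rptr_nat /e rptrE2 (mcomp1l ax) ff.
by rewrite scalerBl.
Qed.

Lemma RB k (x y : pahom A k k) : R (x - y) = R x - R y.
Proof. exact (tensBl _ _ _ _ x y (idm 1)). Qed.
Lemma RZ k a (x : pahom A k k) : R (a *: x) = a *: R x.
Proof. exact (tensZl _ _ _ _ a x (idm 1)). Qed.

Lemma jwS j : jw j.+1 = R (jw j) - ((j.+1)%:R / (j.+2)%:R) *:
   mcomp (R (jw j)) (mcomp (tens (@idm _ A j) E2) (R (jw j))).
Proof. by rewrite /= /ee (tens1r ax). Qed.

Lemma jw0 : jw 0 = idm 1 :> pahom A 1 1.
Proof. by []. Qed.
Lemma R_idm0 : R (idm 0) = idm 1 :> pahom A 1 1.
Proof. exact: (tens_idm ax 0 1). Qed.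

Local Notation jwA k := (@jw _ A k).
Lemma jw1 : [/\ mcomp (jwA 1) (jwA 1) = jwA 1,
   mcomp (jwA 1) (R (jwA 0)) = jwA 1 & rptr (jwA 1) = (2 - 1/2) *: jwA 0].
Proof.
have := @step 0 (jw 0) (idm 0) 2 (1/2).
rewrite jwS; apply.
- by rewrite jw0 (mcomp1l ax).
- by rewrite jw0 -R_idm0 rptrR.
- by rewrite R_idm0 (mcomp1l ax).
- by field.
Qed.

Lemma jw2 : [/\ mcomp (jwA 2) (jwA 2) = jwA 2,
   mcomp (jwA 2) (R (jwA 1)) = jwA 2 & rptr (jwA 2) = (2 - 2/3) *: jwA 1].
Proof.
have [h1 h2 h3] := jw1.
have := @step 1 (jwA 1) (jwA 0) (2 - 1/2) (2%:R/3%:R).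
rewrite [jwA 2]jwS; apply => //; by field.
Qed.

Lemma jw3 : [/\ mcomp (jwA 3) (jwA 3) = jwA 3,
   mcomp (jwA 3) (R (jwA 2)) = jwA 3 & rptr (jwA 3) = (2 - 3/4) *: jwA 2].
Proof.
have [h1 h2 h3] := jw2.
have := @step 2 (jwA 2) (jwA 1) (2 - 2/3) (3%:R/4%:R).
rewrite [jwA 3]jwS; apply => //; by field.
Qed.

Lemma R_idm k : R (idm k) = idm k.+1 :> pahom A k.+1 k.+1.
Proof. exact: idmS. Qed.

Lemma jw1E : jwA 1 = idm 2 - (1/2) *: tens (idm 0) E2.
Proof. by rewrite jwS jw0 R_idm (mcomp1l ax) (mcomp1r ax). Qed.

Lemma RRjw1 : R (R (jwA 1)) = idm 4 - (1/2) *: ee 0 2.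
Proof. by rewrite jw1E !RB !RZ !R_idm /R RRE. Qed.

Lemma SRRjw1 : mcomp S (R (R (jwA 1))) = S.
Proof. by rewrite RRjw1 mcompBr mcompZr (S_uncuppable1 gr) scaler0 subr0 (mcomp1r ax). Qed.
Lemma RRjw1S : mcomp (R (R (jwA 1))) S = S.
Proof. by rewrite RRjw1 mcompBl mcompZl (S_uncappable1 gr) scaler0 subr0 (mcomp1l ax). Qed.

Lemma Rjw2 : R (jwA 2) = R (R (jwA 1)) - (2%:R/3%:R) *:
   mcomp (R (R (jwA 1))) (mcomp (ee 1 1) (R (R (jwA 1)))).
Proof. by rewrite jwS RB RZ !RM. Qed.

Lemma SRjw2 : mcomp S (R (jwA 2)) = S.
Proof.
rewrite Rjw2 mcompBr mcompZr SRRjw1 !(mcompA ax) SRRjw1 (S_uncuppable2 gr).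
by rewrite mcomp0l scaler0 subr0.
Qed.
Lemma Rjw2S : mcomp (R (jwA 2)) S = S.
Proof.
rewrite Rjw2 mcompBl mcompZl RRjw1S -!(mcompA ax) RRjw1S (S_uncappable2 gr).
by rewrite !mcomp0r scaler0 subr0.
Qed.

Lemma jw3E : jwA 3 = R (jwA 2) - (3%:R/4%:R) *: mcomp (R (jwA 2)) (mcomp (ee 2 0) (R (jwA 2))).
Proof. by []. Qed.

Lemma Sjw3 : mcomp S (jwA 3) = S.
Proof.
rewrite jw3E mcompBr mcompZr SRjw2 !(mcompA ax) SRjw2 (S_uncuppable3 gr).
by rewrite mcomp0l scaler0 subr0.
Qed.
Lemma jw3S : mcomp (jwA 3) S = S.
Proof.
rewrite jw3E mcompBl mcompZl Rjw2S -!(mcompA ax) Rjw2S (S_uncappable3 gr).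
by rewrite !mcomp0r scaler0 subr0.
Qed.

Definition L (u v : K) : pahom A 4 4 := u *: jwA 3 + v *: S.
Lemma Lf u : u *: jwA 3 = L u 0.
Proof. by rewrite /L scale0r addr0. Qed.
Lemma LS v : v *: S = L 0 v.
Proof. by rewrite /L scale0r add0r. Qed.
Lemma LD u v u' v' : L u v + L u' v' = L (u + u') (v + v').
Proof. by rewrite /L !scalerDl addrACA. Qed.
Lemma LZ c u v : c *: L u v = L (c * u) (c * v).
Proof. by rewrite /L scalerDr !scalerA. Qed.

Lemma P4E : P4 S = L (3/5) (- (1/5)).
Proof. by rewrite /P4 /L scaleNr. Qed.

Lemma LL a b : mcomp (L a b) (L a b) = L (a * a + 6 * (b * b)) (2 * (a * b) + b * b).
Proof.
have [f2 _ _] := jw3.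
have SS : mcomp S S = L 6 1 by rewrite (S_square gr) /L scale1r.
rewrite {1 2}/L mcompDl' !mcompDr' !mcompZl !mcompZr f2 Sjw3 jw3S SS.
rewrite !Lf !LS !LZ !LD; congr L; ring.
Qed.

Lemma P4P4 : mcomp (P4 S) (P4 S) = P4 S.
Proof. by rewrite P4E LL; congr L; field. Qed.

Lemma P4R : mcomp (P4 S) (R (jwA 2)) = P4 S.
Proof.
have [_ h _] := jw3.
by rewrite /P4 mcompBl !mcompZl h SRjw2.
Qed.

Lemma rptrP4 : rptr (P4 S) = (3/4) *: jwA 2.
Proof.
have [_ _ h] := jw3.
rewrite /P4 rptrB !rptrZ h (S_right_ptrace gr) scaler0 subr0 scalerA.
by congr (_ *: _); field.
Qed.

Lemma P5E : P5 S = R (P4 S) - (4/3) *: mcomp (R (P4 S)) (mcomp (tens (idm 3) E2) (R (P4 S))).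
Proof. by rewrite /P5 /ee (tens1r ax). Qed.
Lemma P6E : P6 S = R (P5 S) - (3/2) *: mcomp (R (P5 S)) (mcomp (tens (idm 4) E2) (R (P5 S))).
Proof. by rewrite /P6 /ee (tens1r ax). Qed.

Lemma P5props : [/\ mcomp (P5 S) (P5 S) = P5 S, mcomp (P5 S) (R (P4 S)) = P5 S
   & rptr (P5 S) = (2 - 4/3) *: P4 S].
Proof.
have := @step 3 (P4 S) (jwA 2) (3/4) (4/3).
rewrite -P5E; apply.
- exact: P4P4.
- exact: rptrP4.
- exact: P4R.
- by field.
Qed.

Lemma rptrP6 : rptr (P6 S) = (2 - 3/2) *: P5 S.
Proof.
have [h1 h2 h3] := P5props.
have := @step 4 (P5 S) (P4 S) (2 - 4/3) (3/2).
rewrite -P6E; case => //; by field.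
Qed.

Lemma trZ n a (x : pahom A n n) : tr (a *: x) = a *: tr x.
Proof. by elim: n x => [|n IH] x //=; rewrite rptrZ IH. Qed.

Lemma tr_jw0 : tr (jwA 0) = 2 *: idm 0.
Proof. by rewrite /= -R_idm rptrR. Qed.

Lemma main_in :
  tr (idm 0 : pahom A 0 0) = 1 *: idm 0 /\
  tr (@P1 _ A) = 2 *: idm 0 /\
  tr (@P2 _ A) = 3 *: idm 0 /\
  tr (@P3 _ A) = 4 *: idm 0 /\
  tr (P4 S) = 3 *: idm 0 /\
  tr (P5 S) = 2 *: idm 0 /\
  tr (P6 S) = 1 *: idm 0 /\
  tr (Q4 S) = 2 *: idm 0.
Proof.
have [_ _ r1] := jw1; have [_ _ r2] := jw2; have [_ _ r3] := jw3.
have [_ _ r5] := P5props.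
have t1 : tr (jwA 1) = 3 *: idm 0.
  have -> : tr (jwA 1) = tr (rptr (jwA 1)) by [].
  rewrite r1 trZ tr_jw0 scalerA.
  by congr (_ *: _); field.
have t2 : tr (jwA 2) = 4 *: idm 0.
  have -> : tr (jwA 2) = tr (rptr (jwA 2)) by [].
  rewrite r2 trZ t1 scalerA.
  by congr (_ *: _); field.
have t3 : tr (jwA 3) = 5 *: idm 0.
  have -> : tr (jwA 3) = tr (rptr (jwA 3)) by [].
  rewrite r3 trZ t2 scalerA.
  by congr (_ *: _); field.
have t4 : tr (P4 S) = 3 *: idm 0.
  have -> : tr (P4 S) = tr (rptr (P4 S)) by [].
  rewrite rptrP4 trZ t2 scalerA.
  by congr (_ *: _); field.
have t5 : tr (P5 S) = 2 *: idm 0.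
  have -> : tr (P5 S) = tr (rptr (P5 S)) by [].
  rewrite r5 trZ t4 scalerA.
  by congr (_ *: _); field.
split; first by rewrite scale1r.
split; first exact: tr_jw0.
split; first exact: t1.
split; first exact: t2.
split; first exact: t4.
split; first exact: t5.
split.
  have -> : tr (P6 S) = tr (rptr (P6 S)) by [].
  rewrite rptrP6 trZ t5 scalerA.
  by congr (_ *: _); field.
have -> : tr (Q4 S) = tr (rptr (Q4 S)) by [].
rewrite /Q4 rptrD !rptrZ (S_right_ptrace gr) scaler0 addr0 r3.
rewrite !trZ t2 !scalerA.
by congr (_ *: _); field.
Qed.

End Basics.

Theorem lemma4p7 (K : numClosedFieldType) (A : paops K) (S : pahom A 4 4) :
  pa_axioms A -> generator_relations S ->
  tr (idm 0 : pahom A 0 0) = 1 *: idm 0 /\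
  tr (@P1 _ A) = 2 *: idm 0 /\
  tr (@P2 _ A) = 3 *: idm 0 /\
  tr (@P3 _ A) = 4 *: idm 0 /\
  tr (P4 S) = 3 *: idm 0 /\
  tr (P5 S) = 2 *: idm 0 /\
  tr (P6 S) = 1 *: idm 0 /\
  tr (Q4 S) = 2 *: idm 0.
Proof. move=> ax gr; exact: (@main_in K A ax S gr). Qed.
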